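(* For every stream covering $\rho:E\to B$, the induced functors $\mathrm{T}_1(\rho):\mathrm{T}_1E\to\mathrm{T}_1B$ and $\mathrm{T}_1(\rho)^{op}:(\mathrm{T}_1E)^{op}\to(\mathrm{T}_1B)^{op}$ are op-fibrations of small categories.
   Context: Streams: a circulation on a space $X$ assigns to each open $V\subset X$ a preorder $\leqslant_V$ such that for every collection $\mathcal{O}$ of open sets, $\leqslant_{\bigcup\mathcal{O}}$ is the preorder with smallest graph containing $\bigcup_{V\in\mathcal{O}}\mathrm{graph}(\leqslant_V)$; a stream is a space with a circulation; a stream map $f:X\to Y$ is continuous with $f(x)\leqslant_V f(y)$ whenever $x\leqslant_{f^{-1}V}y$. An open substream of $X$ is an open $V$ with circulation $W\mapsto\leqslant_W$. A stream covering is a surjective stream map $\rho:E\to B$ such that $B$ is covered by open substreams whose preimages are disjoint unions of open substreams each mapped by $\rho$ isomorphically (as streams) onto the corresponding open substream. $\vec\square[1]$ is $[0,1]$ with circulation $x\leqslant_V y$ iff $x\le y$ and $[x,y]\subset V$; a dipath is a stream map from $\vec\square[1]$. The fundamental category $\mathrm{T}_1X$ has the points of $X$ as objects and, as morphisms $x\to y$, classes of dipaths $x\leadsto y$ modulo homotopy relative $\{0,1\}$ through dipaths, composed by concatenation; $\mathrm{T}_1$ is functorial in stream maps. A functor $F:\mathcal{C}\to\mathcal{D}$ is an op-fibration if for each object $c$ of $\mathcal{C}$, every morphism of $\mathcal{D}$ with source $F(c)$ lifts uniquely along $F$ to a morphism of $\mathcal{C}$ with source $c$. *)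

(* Defs.v *)
From Stdlib Require Import Reals Relations.
Open Scope R_scope.

Record prestream := {
  car : Type;
  sopen : (car -> Prop) -> Prop;
  circ : (car -> Prop) -> car -> car -> Prop
}.

Definition bigU {X : Type} (O : (X -> Prop) -> Prop) : X -> Prop :=
  fun x => exists V, O V /\ V x.

(** A stream: the open sets form a topology, and the circulation axiom holds:
    for every collection O of open sets, <=_{U O} is the preorder on U O with
    smallest graph containing the union of the graphs of the <=_V, V in O.
    (Extensionality clauses make opens/circulation depend only on the set.) *)
Definition is_stream (X : prestream) : Prop :=
  sopen X (fun _ => True) /\
  (forall O : (car X -> Prop) -> Prop,
      (forall V, O V -> sopen X V) -> sopen X (bigU O)) /\
  (forall U V, sopen X U -> sopen X V -> sopen X (fun x => U x /\ V x)) /\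
  (forall U V : car X -> Prop, (forall x, U x <-> V x) -> sopen X U -> sopen X V) /\
  (forall U V : car X -> Prop, (forall x, U x <-> V x) ->
      forall x y, circ X U x y <-> circ X V x y) /\
  (forall O : (car X -> Prop) -> Prop,
      (forall V, O V -> sopen X V) ->
      forall x y, circ X (bigU O) x y <->
        (bigU O x /\ bigU O y /\
         clos_refl_trans (car X) (fun a b => exists V, O V /\ circ X V a b) x y)).

Definition is_stream_map (X Y : prestream) (f : car X -> car Y) : Prop :=
  (forall V, sopen Y V -> sopen X (fun x => V (f x))) /\
  (forall V, sopen Y V -> forall x y,
      circ X (fun z => V (f z)) x y -> circ Y V (f x) (f y)).

Definition is_stream_iso (X Y : prestream) (f : car X -> car Y) : Prop :=
  exists g : car Y -> car X,
    is_stream_map X Y f /\ is_stream_map Y X g /\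
    (forall x, g (f x) = x) /\ (forall y, f (g y) = y).

Definition substream (X : prestream) (V : car X -> Prop) : prestream := {|
  car := { x : car X | V x };
  sopen := fun P => exists W, sopen X W /\ forall s, P s <-> W (proj1_sig s);
  circ := fun P a b =>
    circ X (fun z => exists s, P s /\ proj1_sig s = z) (proj1_sig a) (proj1_sig b)
|}.

(** U is evenly covered: its preimage is a disjoint union of open substreams,
    each mapped by rho isomorphically (as streams) onto the substream U. *)
Definition evenly_covered (E B : prestream) (rho : car E -> car B)
    (U : car B -> Prop) : Prop :=
  exists F : (car E -> Prop) -> Prop,
    (forall W, F W -> sopen E W) /\
    (forall x, U (rho x) <-> bigU F x) /\
    (forall W1 W2 x, F W1 -> F W2 -> W1 x -> W2 x -> forall z, W1 z <-> W2 z) /\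
    (forall W, F W ->
       exists phi : car (substream E W) -> car (substream B U),
         (forall s, proj1_sig (phi s) = rho (proj1_sig s)) /\
         is_stream_iso (substream E W) (substream B U) phi).

Definition is_stream_covering (E B : prestream) (rho : car E -> car B) : Prop :=
  is_stream_map E B rho /\
  (forall b, exists x, rho x = b) /\
  (forall b, exists U, sopen B U /\ U b /\ evenly_covered E B rho U).

Definition Ropen (U : R -> Prop) : Prop :=
  forall x, U x -> exists eps, 0 < eps /\ forall y, Rabs (y - x) < eps -> U y.

Definition I01 : prestream := {|
  car := { t : R | 0 <= t <= 1 };
  sopen := fun P => exists W, Ropen W /\ forall s, P s <-> W (proj1_sig s);
  circ := fun P a b => proj1_sig a <= proj1_sig b /\
            forall s, proj1_sig a <= proj1_sig s <= proj1_sig b -> P s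
|}.

Lemma i0_proof : 0 <= 0 <= 1. Proof. split; [apply Rle_refl | apply Rle_0_1]. Qed.
Lemma i1_proof : 0 <= 1 <= 1. Proof. split; [apply Rle_0_1 | apply Rle_refl]. Qed.
Definition i0 : car I01 := exist _ 0 i0_proof.
Definition i1 : car I01 := exist _ 1 i1_proof.

Definition is_dipath (X : prestream) (g : car I01 -> car X) : Prop :=
  is_stream_map I01 X g.

Definition sq_open (P : car I01 -> car I01 -> Prop) : Prop :=
  forall s t, P s t -> exists eps, 0 < eps /\ forall s' t',
    Rabs (proj1_sig s' - proj1_sig s) < eps ->
    Rabs (proj1_sig t' - proj1_sig t) < eps -> P s' t'.

Definition dihomotopic (X : prestream) (g h : car I01 -> car X) : Prop :=
  exists H : car I01 -> car I01 -> car X,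
    (forall V, sopen X V -> sq_open (fun s t => V (H s t))) /\
    (forall s, is_dipath X (H s)) /\
    (forall s, H s i0 = g i0 /\ H s i1 = g i1) /\
    (forall t, H i0 t = g t) /\
    (forall t, H i1 t = h t).

(** * Categories presented by objects, (valid) arrows with source/target,
    and an equality relation on arrows (morphisms = arrows up to aeq). *)
Record catP := {
  Ob : Type;
  Arr : Type;
  isArr : Arr -> Prop;
  src : Arr -> Ob;
  tgt : Arr -> Ob;
  aeq : Arr -> Arr -> Prop
}.

Definition opcat (C : catP) : catP := {|
  Ob := Ob C; Arr := Arr C; isArr := isArr C;
  src := tgt C; tgt := src C; aeq := aeq C |}.

Record functorP (C D : catP) := {
  Fob : Ob C -> Ob D;
  Farr : Arr C -> Arr D
}.
Arguments Fob {C D} _ _.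
Arguments Farr {C D} _ _.

Definition opfunctor {C D : catP} (F : functorP C D) : functorP (opcat C) (opcat D) :=
  Build_functorP (opcat C) (opcat D) (Fob F) (Farr F).

Definition op_fibration {C D : catP} (F : functorP C D) : Prop :=
  forall (c : Ob C) (g : Arr D), isArr D g -> src D g = Fob F c ->
    (exists f, isArr C f /\ src C f = c /\ aeq D (Farr F f) g) /\
    (forall f1 f2, isArr C f1 -> isArr C f2 -> src C f1 = c -> src C f2 = c ->
       aeq D (Farr F f1) g -> aeq D (Farr F f2) g -> aeq C f1 f2).

(** The fundamental category T1 X: objects are points, morphisms x -> y are
    dipaths x ~> y modulo dihomotopy (composition by concatenation). *)
Definition T1 (X : prestream) : catP := {|
  Ob := car X;
  Arr := car I01 -> car X;
  isArr := is_dipath X;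
  src := fun g => g i0;
  tgt := fun g => g i1;
  aeq := dihomotopic X |}.

Definition T1f {X Y : prestream} (f : car X -> car Y) : functorP (T1 X) (T1 Y) :=
  Build_functorP (T1 X) (T1 Y) f (fun (g : car I01 -> car X) t => f (g t)).

(* Main.v *)
Require Import Defs.
From Stdlib Require Import Reals Relations Lra Lia ClassicalEpsilon ProofIrrelevance Classical FunctionalExtensionality.
Open Scope R_scope.

Definition clamp (x : R) : R := Rmax 0 (Rmin 1 x).

Lemma clamp_in x : 0 <= clamp x <= 1.
Proof. unfold clamp, Rmax, Rmin. repeat destruct Rle_dec; lra. Qed.

Lemma clamp_id x : 0 <= x <= 1 -> clamp x = x.
Proof. unfold clamp, Rmax, Rmin. repeat destruct Rle_dec; lra. Qed.

Lemma clamp_lip x y : Rabs (clamp x - clamp y) <= Rabs (x - y).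
Proof. unfold clamp, Rmax, Rmin. repeat destruct Rle_dec; unfold Rabs; repeat destruct Rcase_abs; lra. Qed.

Lemma lub_approx (E0 : R -> Prop) m z : is_lub E0 m -> z < m -> exists r, E0 r /\ z < r.
Proof.
  intros [Hu Hl] Hz. apply NNPP. intro Hn. assert (m <= z); [|lra].
  apply Hl. intros r Hr. destruct (Rle_dec r z); auto. exfalso; apply Hn; exists r; split; auto; lra.
Qed.

Lemma lip_cont (f : R -> R) : (forall a b, Rabs (f a - f b) <= Rabs (a - b)) -> forall x, continuity_pt f x.
Proof.
  intros Hf x eps Heps. exists eps. split; auto. intros y [_ Hy]. simpl in *. unfold R_dist in *.
  eapply Rle_lt_trans; [apply Hf|exact Hy].
Qed.

Section Leb.
Variable P : R -> R -> R -> Prop.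
Hypothesis mono : forall x y r x' y' r', P x y r -> 0 < r' -> Rabs (x'-x) + r' <= r -> Rabs (y'-y) + r' <= r -> P x' y' r'.
Hypothesis loc : forall x y, 0<=x<=1 -> 0<=y<=1 -> exists r, 0<r /\ P x y r.

Let Pc x y r := P (clamp x) (clamp y) r.
Let Es x y r := r <= 0 \/ (r <= 1 /\ Pc x y r).

Lemma Es_bnd x y : bound (Es x y).
Proof. exists 1. intros r [H|[H _]]; lra. Qed.
Lemma Es_ne x y : exists r, Es x y r.
Proof. exists 0. left; lra. Qed.

Let d x y := proj1_sig (completeness (Es x y) (Es_bnd x y) (Es_ne x y)).
Lemma d_lub x y : is_lub (Es x y) (d x y).
Proof. unfold d. destruct completeness; auto. Qed.

Lemma d_nonneg x y : 0 <= d x y.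
Proof. destruct (d_lub x y) as [H _]. apply H. left; lra. Qed.

Lemma d_pos x y : 0 < d x y.
Proof.
  destruct (loc (clamp x) (clamp y) (clamp_in x) (clamp_in y)) as [r [Hr HP]].
  assert (HP' : Pc x y (Rmin r 1)).
  { unfold Pc. eapply mono; [exact HP| | |]; unfold Rmin; destruct Rle_dec;
    rewrite ?Rminus_diag, ?Rabs_R0; lra. }
  destruct (d_lub x y) as [H _].
  assert (Rmin r 1 <= d x y). { apply H. right. split; auto. unfold Rmin; destruct Rle_dec; lra. }
  assert (0 < Rmin r 1) by (unfold Rmin; destruct Rle_dec; lra). lra.
Qed.

Lemma d_lip1 x y x' y' : d x y - Rmax (Rabs (x'-x)) (Rabs (y'-y)) <= d x' y'.
Proof.
  set (h := Rmax (Rabs (x'-x)) (Rabs (y'-y))).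
  assert (Hh1 : Rabs (x'-x) <= h) by apply Rmax_l.
  assert (Hh2 : Rabs (y'-y) <= h) by apply Rmax_r.
  destruct (Rle_dec (d x y - h) (d x' y')) as [|Hn]; auto. exfalso.
  destruct (lub_approx _ _ (d x' y' + h) (d_lub x y)) as [r [Hr Hlt]]; [lra|].
  pose proof (d_nonneg x' y').
  destruct Hr as [Hr|[Hr1 Hr2]]; [pose proof (Rabs_pos (x'-x)); lra|].
  assert (HP : Pc x' y' (r - h)).
  { unfold Pc in *. eapply mono; [exact Hr2| lra | |].
    - pose proof (clamp_lip x' x); lra.
    - pose proof (clamp_lip y' y); lra. }
  destruct (d_lub x' y') as [Hu _].
  assert (r - h <= d x' y'). { apply Hu. right. split; auto. pose proof (Rabs_pos (x'-x)); lra. }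
  lra.
Qed.

Lemma d_lip_y x y y' : Rabs (d x y - d x y') <= Rabs (y - y').
Proof.
  pose proof (d_lip1 x y x y') as H1. pose proof (d_lip1 x y' x y) as H2.
  replace (x - x) with 0 in * by ring. rewrite Rabs_R0 in *.
  rewrite Rmax_right in H1 by apply Rabs_pos. rewrite Rmax_right in H2 by apply Rabs_pos.
  rewrite Rabs_minus_sym in H1.
  unfold Rabs at 1; destruct Rcase_abs; lra.
Qed.

Lemma ymin_ex x : {ym | (forall c, 0 <= c <= 1 -> d x ym <= d x c) /\ 0 <= ym <= 1}.
Proof.
  apply constructive_indefinite_description.
  apply continuity_ab_min; [lra|]. intros c _. apply lip_cont. intros; apply d_lip_y.
Qed.

Let m x := d x (proj1_sig (ymin_ex x)).

Lemma m_le x c : 0 <= c <= 1 -> m x <= d x c.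
Proof. intros. unfold m. destruct (ymin_ex x) as [ym [H1 H2]]. simpl. auto. Qed.

Lemma m_lip x x' : m x - Rabs (x' - x) <= m x'.
Proof.
  unfold m at 2. idtac. destruct (ymin_ex x') as [ym [H1 H2]]. simpl.
  pose proof (d_lip1 x ym x' ym). replace (ym - ym) with 0 in H by ring. rewrite Rabs_R0 in H.
  rewrite Rmax_left in H by apply Rabs_pos.
  pose proof (m_le x ym H2). eapply Rle_trans; [|exact H]. apply Rplus_le_compat_r. exact H0.
Qed.

Lemma leb_main : exists dl, 0 < dl /\ forall x y, 0<=x<=1 -> 0<=y<=1 -> P x y dl.
Proof.
  assert (Hc : forall c, 0 <= c <= 1 -> continuity_pt m c).
  { intros c _. apply lip_cont. intros a b. pose proof (m_lip a b). pose proof (m_lip b a).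
    rewrite (Rabs_minus_sym a b) in H0 |- *. unfold Rabs at 1; destruct Rcase_abs; lra. }
  destruct (continuity_ab_min m 0 1 ltac:(lra) Hc) as [xm [Hxm Hxm2]].
  assert (Hpos : 0 < m xm). { unfold m. apply d_pos. }
  exists (m xm / 2). split; [lra|]. intros x y Hx Hy.
  assert (Hd : m xm <= d x y). { eapply Rle_trans; [apply (Hxm x Hx)| apply m_le; auto]. }
  destruct (lub_approx _ _ (m xm / 2) (d_lub x y)) as [r [Hr Hlt]]; [lra|].
  destruct Hr as [Hr|[Hr1 Hr2]]; [lra|].
  unfold Pc in Hr2. rewrite (clamp_id x Hx), (clamp_id y Hy) in Hr2.
  eapply mono; [exact Hr2|lra| |]; rewrite ?Rminus_diag, ?Rabs_R0; lra.
Qed.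
End Leb.

Lemma sig_ext {A : Type} {P : A -> Prop} (a b : {x | P x}) : proj1_sig a = proj1_sig b -> a = b.
Proof. destruct a, b; simpl; intros ->. f_equal. apply proof_irrelevance. Qed.

Section StreamFacts.
Variable X : prestream.
Hypothesis hX : is_stream X.

Lemma circ_ext (U V : car X -> Prop) x y : (forall z, U z <-> V z) -> circ X U x y -> circ X V x y.
Proof. intros H. destruct hX as (_&_&_&_&H5&_). apply (proj1 (H5 U V H x y)). Qed.

Lemma circ_single (V : car X -> Prop) : sopen X V -> forall x y,
  circ X V x y <-> (V x /\ V y /\ clos_refl_trans _ (circ X V) x y).
Proof.
  intros HV x y. destruct hX as (_&_&_&_&H5&H6).
  set (O := fun Z : car X -> Prop => Z = V).
  assert (HO : forall W, O W -> sopen X W) by (intros W ->; auto).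
  assert (Hb : forall z, bigU O z <-> V z).
  { intros z; split. intros [W [-> Hz]]; auto. intros Hz; exists V; split; auto; reflexivity. }
  assert (Hr : forall a b, clos_refl_trans _ (fun a b => exists W, O W /\ circ X W a b) a b <->
                           clos_refl_trans _ (circ X V) a b).
  { intros a b; split; intro H; induction H; eauto using rt_refl, rt_trans.
    - destruct H as [W [-> HW]]. apply rt_step; auto.
    - apply rt_step. exists V; split; auto; reflexivity. }
  rewrite <- (H5 _ _ Hb x y). rewrite (H6 O HO x y). rewrite Hb, Hb, Hr. tauto.
Qed.

Lemma circ_refl V x : sopen X V -> V x -> circ X V x x.
Proof. intros HV Hx. apply circ_single; auto. repeat split; auto. apply rt_refl. Qed.

Lemma circ_trans V x y z : sopen X V -> circ X V x y -> circ X V y z -> circ X V x z.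
Proof.
  intros HV H1 H2. pose proof H1 as H1'. pose proof H2 as H2'.
  apply circ_single in H1; auto. apply circ_single in H2; auto.
  apply circ_single; auto. intuition. eapply rt_trans; apply rt_step; eauto.
Qed.

Lemma circ_mono A V x y : sopen X A -> sopen X V -> (forall z, A z -> V z) -> circ X A x y -> circ X V x y.
Proof.
  intros HA HV Hsub H. destruct hX as (_&_&_&_&H5&H6).
  set (O := fun Z : car X -> Prop => Z = A \/ Z = V).
  assert (HO : forall W, O W -> sopen X W) by (intros W [->| ->]; auto).
  assert (Hb : forall z, bigU O z <-> V z).
  { intros z; split. intros [W [[->| ->] Hz]]; auto. intros Hz; exists V; split; auto; right; reflexivity. }
  apply (proj1 (H5 _ _ Hb x y)). apply (proj2 (H6 O HO x y)). pose proof H as H0. apply circ_single in H0; auto. destruct H0 as (Hx&Hy&_).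
  split; [apply Hb; auto|]. split; [apply Hb; auto|]. apply rt_step. exists A; split; auto. left; reflexivity.
Qed.
End StreamFacts.

Section Cover.
Variables E B : prestream.
Hypothesis hE : is_stream E.
Hypothesis hB : is_stream B.
Variable rho : car E -> car B.

Definition EvD (U : car B -> Prop) (F : (car E -> Prop) -> Prop) : Prop :=
    (forall W, F W -> sopen E W) /\
    (forall x, U (rho x) <-> bigU F x) /\
    (forall W1 W2 x, F W1 -> F W2 -> W1 x -> W2 x -> forall z, W1 z <-> W2 z) /\
    (forall W, F W ->
       exists phi : car (substream E W) -> car (substream B U),
         (forall s, proj1_sig (phi s) = rho (proj1_sig s)) /\
         is_stream_iso (substream E W) (substream B U) phi).

Variables (U : car B -> Prop) (F : (car E -> Prop) -> Prop).
Hypothesis hU : sopen B U.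
Hypothesis hF : EvD U F.

Lemma sheet_open W : F W -> sopen E W.
Proof. destruct hF as (H&_); auto. Qed.

Lemma sheet_over W e : F W -> W e -> U (rho e).
Proof. destruct hF as (_&H&_). intros; apply H. exists W; auto. Qed.

Lemma in_sheet e : U (rho e) -> exists W, F W /\ W e.
Proof. destruct hF as (_&H&_). intros Hu. apply H in Hu. exact Hu. Qed.

Lemma sheet_disj W1 W2 x : F W1 -> F W2 -> W1 x -> W2 x -> forall z, W1 z <-> W2 z.
Proof. destruct hF as (_&_&H&_). eauto. Qed.

Lemma sheet_iso W : F W -> exists (phi : car (substream E W) -> car (substream B U))
   (psi : car (substream B U) -> car (substream E W)),
   (forall s, proj1_sig (phi s) = rho (proj1_sig s)) /\
   is_stream_map (substream B U) (substream E W) psi /\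
   (forall x, psi (phi x) = x) /\ (forall y, phi (psi y) = y).
Proof.
  destruct hF as (_&_&_&H). intros HW. destruct (H W HW) as [phi [Hp [psi (_&H2&H3&H4)]]].
  exists phi, psi. auto.
Qed.

Lemma sheet_inj W e1 e2 : F W -> W e1 -> W e2 -> rho e1 = rho e2 -> e1 = e2.
Proof.
  intros HW H1 H2 Hr. destruct (sheet_iso W HW) as (phi&psi&Hp&_&Hpp&_).
  assert (phi (exist _ e1 H1) = phi (exist _ e2 H2)).
  { apply sig_ext. rewrite !Hp. simpl. auto. }
  apply (f_equal psi) in H. rewrite !Hpp in H. apply (f_equal (@proj1_sig _ _)) in H. exact H.
Qed.

Lemma sheet_surj W b : F W -> U b -> exists e, W e /\ rho e = b.
Proof.
  intros HW Hb. destruct (sheet_iso W HW) as (phi&psi&Hp&_&_&Hpp).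
  exists (proj1_sig (psi (exist _ b Hb))). split. apply proj2_sig.
  rewrite <- Hp, Hpp. reflexivity.
Qed.

Lemma sheet_cont W V e : F W -> sopen E V -> W e -> V e ->
  exists O, sopen B O /\ O (rho e) /\ forall e', W e' -> O (rho e') -> V e'.
Proof.
  intros HW HV He HVe. destruct (sheet_iso W HW) as (phi&psi&Hp&[Hc _]&Hpp&Hpp2).
  set (V'' := fun s : car (substream E W) => V (proj1_sig s)).
  assert (HV'' : sopen (substream E W) V'') by (exists V; split; auto; reflexivity).
  destruct (Hc _ HV'') as [O [HO HOi]].
  exists O. split; auto. split.
  - specialize (HOi (phi (exist _ e He))). rewrite Hp in HOi. apply HOi. unfold V''. rewrite Hpp. exact HVe.
  - intros e' He' HO'. specialize (HOi (phi (exist _ e' He'))). rewrite Hp in HOi.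
    apply HOi in HO'. unfold V'' in HO'. rewrite Hpp in HO'. exact HO'.
Qed.

Lemma sheet_circ W V O e1 e2 : F W -> sopen E V ->
  (forall e', W e' -> (O (rho e') <-> V e')) -> W e1 -> W e2 ->
  circ B (fun b => O b /\ U b) (rho e1) (rho e2) -> circ E V e1 e2.
Proof.
  intros HW HV HOV H1 H2 Hc. destruct (sheet_iso W HW) as (phi&psi&Hp&[_ Hd]&Hpp&Hpp2).
  set (V'' := fun s : car (substream E W) => V (proj1_sig s)).
  assert (HV'' : sopen (substream E W) V'') by (exists V; split; auto; reflexivity).
  specialize (Hd V'' HV'' (phi (exist _ e1 H1)) (phi (exist _ e2 H2))).
  rewrite !Hpp in Hd. simpl in Hd.
  assert (HWo : sopen E (fun z => V z /\ W z)).
  { destruct hE as (_&_&H3&_). apply H3; auto. apply sheet_open; auto. }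
  eapply circ_mono; [exact hE|exact HWo|exact HV| intros z [? ?]; auto|].
  eapply circ_ext; [exact hE| |apply Hd].
  - intros z; split. intros [s [Hs <-]]. split; auto. apply proj2_sig.
    intros [Hv Hw]. exists (exist _ z Hw). split; auto.
  - simpl. rewrite !Hp. simpl. eapply circ_ext; [exact hB| |exact Hc].
    intros b; split.
    + intros [Ob Ub]. exists (exist _ b Ub). split; auto. unfold V''.
      apply HOV. apply proj2_sig. rewrite <- Hp, Hpp2. exact Ob.
    + intros [s [Hs <-]]. split; [|apply proj2_sig]. unfold V'' in Hs.
      apply HOV in Hs; [|apply proj2_sig]. rewrite <- Hp, Hpp2 in Hs. exact Hs.
Qed.
End Cover.

Lemma sheet_image E B rho U F W V : EvD E B rho U F -> F W -> sopen E V ->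
  exists O, sopen B O /\ forall e', W e' -> (O (rho e') <-> V e').
Proof.
  intros HF HW HV. destruct (sheet_iso E B rho U F HF W HW) as (phi&psi&Hp&[Hc _]&Hpp&Hpp2).
  set (V'' := fun s : car (substream E W) => V (proj1_sig s)).
  assert (HV'' : sopen (substream E W) V'') by (exists V; split; auto; reflexivity).
  destruct (Hc _ HV'') as [O [HO HOi]].
  exists O. split; auto. intros e' He'. specialize (HOi (phi (exist _ e' He'))). rewrite Hp in HOi.
  unfold V'' in HOi. rewrite Hpp in HOi. simpl in HOi. tauto.
Qed.

Definition pcont1 (X : prestream) (l : R -> car X) : Prop :=
  forall V, sopen X V -> forall x, 0 <= x <= 1 -> V (l x) ->
    exists eps, 0 < eps /\ forall x', 0 <= x' <= 1 -> Rabs (x' - x) < eps -> V (l x').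

Section Uniq.
Variables E B : prestream.
Hypothesis hE : is_stream E.
Hypothesis hB : is_stream B.
Variable rho : car E -> car B.
Hypothesis hcov : forall b, exists U, sopen B U /\ U b /\ exists F, EvD E B rho U F.

Lemma ball_mono x r x' r' x'' : Rabs (x' - x) + r' <= r -> Rabs (x'' - x') < r' -> Rabs (x'' - x) < r.
Proof. intros H1 H2. pose proof (Rabs_triang (x''-x') (x'-x)). replace (x''-x'+(x'-x)) with (x''-x) in H by ring. lra. Qed.

Lemma uniq1 (l1 l2 : R -> car E) : pcont1 E l1 -> pcont1 E l2 ->
  (forall u, 0 <= u <= 1 -> rho (l1 u) = rho (l2 u)) ->
  forall a, 0 <= a <= 1 -> l1 a = l2 a -> forall u, 0 <= u <= 1 -> l1 u = l2 u.
Proof.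
  intros Hc1 Hc2 Hr a Ha Hla.
  set (P := fun x (_ : R) r => exists U F W1 W2, sopen B U /\ EvD E B rho U F /\ F W1 /\ F W2 /\
     forall x', 0 <= x' <= 1 -> Rabs (x' - x) < r -> W1 (l1 x') /\ W2 (l2 x')).
  destruct (leb_main P) as [dl [Hdl HP]].
  { intros x y r x' y' r' [U [F [W1 [W2 (H1&H2&H3&H4&H5)]]]] Hr' Hx Hy.
    exists U, F, W1, W2. do 4 (split; [assumption|]). intros x'' Hx'' Hd. apply H5; auto. eapply ball_mono; eauto. }
  { intros x y Hx _. destruct (hcov (rho (l1 x))) as [U [HU [Hux [F HF]]]].
    destruct (in_sheet E B rho U F HF (l1 x) Hux) as [W1 [HW1 Hx1]].
    rewrite (Hr x Hx) in Hux.
    destruct (in_sheet E B rho U F HF (l2 x) Hux) as [W2 [HW2 Hx2]].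
    destruct (Hc1 W1 (sheet_open E B rho U F HF W1 HW1) x Hx Hx1) as [e1 [He1 H1]].
    destruct (Hc2 W2 (sheet_open E B rho U F HF W2 HW2) x Hx Hx2) as [e2 [He2 H2]].
    exists (Rmin e1 e2). split. apply Rmin_glb_lt; auto.
    exists U, F, W1, W2. do 4 (split; [assumption|]). intros x' Hx' Hd. split.
    - apply H1; auto. pose proof (Rmin_l e1 e2); lra.
    - apply H2; auto. pose proof (Rmin_r e1 e2); lra. }
  assert (step : forall u u', 0 <= u <= 1 -> 0 <= u' <= 1 -> Rabs (u - u') < dl -> l1 u' = l2 u' -> l1 u = l2 u).
  { intros u u' Hu Hu' Hd Heq. destruct (HP u' 0 Hu' ltac:(lra)) as [U [F [W1 [W2 (H1&H2&H3&H4&H5)]]]].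
    destruct (H5 u Hu Hd) as [A1 A2]. assert (Hz : Rabs (u' - u') < dl) by (rewrite Rminus_diag, Rabs_R0; lra).
    destruct (H5 u' Hu' Hz) as [B1 B2].
    rewrite Heq in B1. apply (sheet_disj E B rho U F H2 W2 W1 _ H4 H3 B2 B1) in A2.
    apply (sheet_inj E B rho U F H2 W1); auto. }
  assert (prop : forall n : nat, forall u, 0 <= u <= 1 -> Rabs (u - a) <= INR n * (dl/2) -> l1 u = l2 u).
  { induction n; intros u Hu Hd.
    - simpl in Hd. assert (u = a). { pose proof (Rabs_pos (u-a)). assert (Rabs (u-a) = 0) by lra. unfold Rabs in H0; destruct Rcase_abs; lra. } subst; auto.
    - destruct (Rle_dec (Rabs (u - a)) (INR n * (dl/2))) as [Hle|Hgt]; auto.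
      rewrite S_INR in Hd.
      destruct (Rlt_dec a u) as [Hau|Hau].
      + set (u' := Rmax a (u - dl/2)).
        assert (a <= u' <= u) by (unfold u', Rmax; destruct Rle_dec; lra).
        apply (step u u'); auto; [lra| |].
        * unfold u', Rmax in *; destruct Rle_dec; rewrite Rabs_right; lra.
        * apply IHn; [lra|]. rewrite Rabs_right by lra. rewrite Rabs_right in Hd by lra.
          unfold u', Rmax in *; destruct Rle_dec; pose proof (pos_INR n); nra.
      + set (u' := Rmin a (u + dl/2)).
        assert (u <= u' <= a) by (unfold u', Rmin; destruct Rle_dec; lra).
        apply (step u u'); auto; [lra| |].
        * unfold u', Rmin in *; destruct Rle_dec; rewrite Rabs_left1; lra.
        * apply IHn; [lra|]. rewrite Rabs_left1 by lra. rewrite Rabs_left1 in Hd by lra.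
          unfold u', Rmin in *; destruct Rle_dec; pose proof (pos_INR n); nra. }
  intros u Hu. destruct (INR_archimed (dl/2) 1) as [n Hn]; [lra|].
  apply (prop n u Hu). assert (Rabs (u - a) <= 1). { unfold Rabs; destruct Rcase_abs; lra. } lra.
Qed.
End Uniq.

Definition sq (p : R * R) : Prop := 0 <= fst p <= 1 /\ 0 <= snd p <= 1.
Definition inB (a : R * R) (r : R) (q : R * R) : Prop :=
  Rabs (fst q - fst a) < r /\ Rabs (snd q - snd a) < r.
Definition contS (X : prestream) (f : R * R -> car X) : Prop :=
  forall V, sopen X V -> forall p, sq p -> V (f p) ->
    exists eps, 0 < eps /\ forall q, sq q -> inB p eps q -> V (f q).
Definition lin (a b : R * R) (t : R) : R * R :=
  (fst a + t * (fst b - fst a), snd a + t * (snd b - snd a)).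

Lemma lin0 a b : lin a b 0 = a.
Proof. destruct a; unfold lin; simpl; f_equal; ring. Qed.
Lemma lin1 a b : lin a b 1 = b.
Proof. destruct a, b; unfold lin; simpl; f_equal; ring. Qed.
Lemma lin_same a t : lin a a t = a.
Proof. destruct a; unfold lin; simpl; f_equal; ring. Qed.

Lemma conv1 a b t : 0 <= a <= 1 -> 0 <= b <= 1 -> 0 <= t <= 1 -> 0 <= a + t * (b - a) <= 1.
Proof. intros. nra. Qed.
Lemma lin_sq a b t : sq a -> sq b -> 0 <= t <= 1 -> sq (lin a b t).
Proof. intros [? ?] [? ?] ?. split; simpl; apply conv1; auto. Qed.

Lemma abs_conv c x y t r : Rabs (x - c) < r -> Rabs (y - c) < r -> 0 <= t <= 1 -> Rabs (x + t * (y - x) - c) < r.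
Proof.
  intros H1 H2 Ht. replace (x + t*(y-x) - c) with ((1-t)*(x-c) + t*(y-c)) by ring.
  eapply Rle_lt_trans; [apply Rabs_triang|]. rewrite !Rabs_mult, (Rabs_right (1-t)), (Rabs_right t) by lra.
  assert (A2 : t * Rabs (y - c) <= t * r) by (apply Rmult_le_compat_l; lra).
  destruct (Rlt_dec t 1).
  - assert ((1-t) * Rabs (x-c) < (1-t) * r) by (apply Rmult_lt_compat_l; lra). lra.
  - assert (t = 1) by lra. subst. assert (1 * Rabs (y - c) < 1 * r) by (apply Rmult_lt_compat_l; lra). lra.
Qed.
Lemma lin_ball c r a b t : inB c r a -> inB c r b -> 0 <= t <= 1 -> inB c r (lin a b t).
Proof. intros [? ?] [? ?] ?. split; simpl; apply abs_conv; auto. Qed.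

Lemma abs_lin_t a b t s : 0 <= a <= 1 -> 0 <= b <= 1 -> Rabs ((a + t*(b-a)) - (a + s*(b-a))) <= Rabs (t - s).
Proof.
  intros. replace ((a + t*(b-a)) - (a + s*(b-a))) with ((t-s)*(b-a)) by ring.
  rewrite Rabs_mult. assert (Rabs (b - a) <= 1) by (unfold Rabs; destruct Rcase_abs; lra).
  pose proof (Rabs_pos (t-s)). nra.
Qed.
Lemma lin_t_ball a b t s r : sq a -> sq b -> Rabs (t - s) < r -> inB (lin a b s) r (lin a b t).
Proof. intros [? ?] [? ?] ?. split; simpl; eapply Rle_lt_trans; try apply abs_lin_t; auto. Qed.

Lemma abs_lin_b a b b' t : 0 <= t <= 1 -> Rabs ((a + t*(b'-a)) - (a + t*(b-a))) <= Rabs (b' - b).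
Proof.
  intros. replace ((a + t*(b'-a)) - (a + t*(b-a))) with (t*(b'-b)) by ring.
  rewrite Rabs_mult, (Rabs_right t) by lra. pose proof (Rabs_pos (b'-b)). nra.
Qed.
Lemma lin_b_ball a b b' t r : 0 <= t <= 1 -> inB b r b' -> inB (lin a b t) r (lin a b' t).
Proof. intros ? [? ?]. split; simpl; eapply Rle_lt_trans; try apply abs_lin_b; auto. Qed.

Lemma inB_tri a b c r1 r2 : inB a r1 b -> inB b r2 c -> inB a (r1 + r2) c.
Proof.
  intros [H1 H2] [H3 H4]. split.
  - pose proof (Rabs_triang (fst c - fst b) (fst b - fst a)). replace (fst c - fst b + (fst b - fst a)) with (fst c - fst a) in H by ring. lra.
  - pose proof (Rabs_triang (snd c - snd b) (snd b - snd a)). replace (snd c - snd b + (snd b - snd a)) with (snd c - snd a) in H by ring. lra.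
Qed.
Lemma inB_sym a b r : inB a r b -> inB b r a.
Proof. intros [? ?]; split; rewrite Rabs_minus_sym; auto. Qed.
Lemma inB_mono a b r r' : r <= r' -> inB a r b -> inB a r' b.
Proof. intros ? [? ?]; split; lra. Qed.
Lemma inB_refl a r : 0 < r -> inB a r a.
Proof. intros; split; rewrite Rminus_diag, Rabs_R0; auto. Qed.

Section Cover2.
Variables E B : prestream.
Hypothesis hE : is_stream E.
Hypothesis hB : is_stream B.
Variable rho : car E -> car B.

Lemma sheet_lift_cont {D : Type} (m : D -> car E) (k : D -> car B) (S : D -> Prop) U F W :
  EvD E B rho U F -> F W -> (forall z, S z -> W (m z) /\ rho (m z) = k z) ->
  forall V, sopen E V -> forall z0, S z0 -> V (m z0) ->
  exists O, sopen B O /\ O (k z0) /\ forall z, S z -> O (k z) -> V (m z).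
Proof.
  intros HF HW Hm V HV z0 Hz0 HVz. destruct (Hm z0 Hz0) as [Hw Hr].
  destruct (sheet_cont E B rho U F HF W V (m z0) HW HV Hw HVz) as [O [HO [HO1 HO2]]].
  exists O. split; auto. split. rewrite <- Hr; auto. intros z Hz Ok. destruct (Hm z Hz) as [Hw' Hr'].
  apply HO2; auto. rewrite Hr'; auto.
Qed.
End Cover2.

Section Exist.
Variables E B : prestream.
Hypothesis hE : is_stream E.
Hypothesis hB : is_stream B.
Variable rho : car E -> car B.
Hypothesis hcov : forall b, exists U, sopen B U /\ U b /\ exists F, EvD E B rho U F.
Variable K : R * R -> car B.
Hypothesis hK : contS B K.
Variable p0 : R * R.
Variable e0 : car E.
Hypothesis hp0 : sq p0.
Hypothesis he0 : rho e0 = K p0.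

Variable dl : R.
Hypothesis hdl : 0 < dl.
Definition GoodUF (a : R * R) (UF : (car B -> Prop) * ((car E -> Prop) -> Prop)) : Prop :=
  sopen B (fst UF) /\ EvD E B rho (fst UF) (snd UF) /\ forall q, sq q -> inB a dl q -> fst UF (K q).
Hypothesis hP : forall a, sq a -> exists UF, GoodUF a UF.

Definition sel (a : R * R) := epsilon (inhabits ((fun _ : car B => True), (fun _ : car E -> Prop => True))) (GoodUF a).
Lemma sel_spec a : sq a -> GoodUF a (sel a).
Proof. intros. unfold sel. apply epsilon_spec. auto. Qed.

Definition Tprop a e z e' := exists W, snd (sel a) W /\ W e /\ W e' /\ rho e' = K z.
Definition T a e z := epsilon (inhabits e) (Tprop a e z).

Lemma Te_hyp a b e : sq a -> sq b -> inB a dl b -> rho e = K b -> exists W, snd (sel a) W /\ W e.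
Proof.
  intros Ha Hb Hab He. destruct (sel_spec a Ha) as (HU&HF&Hin).
  apply (in_sheet E B rho _ _ HF). rewrite He. auto.
Qed.

Lemma T_spec a e z : sq a -> sq z -> inB a dl z -> (exists W, snd (sel a) W /\ W e) -> Tprop a e z (T a e z).
Proof.
  intros Ha Hz Haz [W [HW He]]. unfold T. apply epsilon_spec.
  destruct (sel_spec a Ha) as (HU&HF&Hin).
  destruct (sheet_surj E B rho _ _ HF W (K z) HW (Hin z Hz Haz)) as [e' [He' Hr]].
  exists e', W. auto.
Qed.

Lemma T_uniq a e z e1 e2 : sq a -> Tprop a e z e1 -> Tprop a e z e2 -> e1 = e2.
Proof.
  intros Ha [W1 (H1&H2&H3&H4)] [W2 (H5&H6&H7&H8)]. destruct (sel_spec a Ha) as (HU&HF&Hin).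
  apply (sheet_disj E B rho _ _ HF W2 W1 e H5 H1 H6 H2) in H7.
  apply (sheet_inj E B rho _ _ HF W1); auto. congruence.
Qed.

Lemma T_self a b e : sq a -> sq b -> inB a dl b -> rho e = K b -> T a e b = e.
Proof.
  intros Ha Hb Hab He. pose proof (Te_hyp a b e Ha Hb Hab He) as Hw.
  apply (T_uniq a e b); auto. apply T_spec; auto.
  destruct Hw as [W [? ?]]. exists W. auto.
Qed.

Lemma T_rho a e z : sq a -> sq z -> inB a dl z -> (exists W, snd (sel a) W /\ W e) -> rho (T a e z) = K z.
Proof. intros. destruct (T_spec a e z) as [W (?&?&?&?)]; auto. Qed.

Lemma T_cocycle a b z e : sq a -> sq b -> sq z -> inB a dl b -> inB a dl z -> inB b dl z -> rho e = K a ->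
  T b (T a e b) z = T a e z.
Proof.
  intros Ha Hb Hz Hab Haz Hbz He.
  assert (Hwa : exists W, snd (sel a) W /\ W e) by (apply (Te_hyp a a); auto; apply inB_refl; auto).
  set (eb := T a e b).
  assert (Heb : rho eb = K b) by (apply T_rho; auto).
  assert (Hwb : exists W, snd (sel b) W /\ W eb) by (apply (Te_hyp b b); auto; apply inB_refl; auto).
  set (sg := fun u => lin b z (clamp u)).
  assert (Hsg : forall u, 0 <= u <= 1 -> sq (sg u) /\ inB a dl (sg u) /\ inB b dl (sg u)).
  { intros u Hu. unfold sg. pose proof (clamp_in u). split; [apply lin_sq; auto|].
    split; apply lin_ball; auto. apply inB_refl; auto. }
  destruct (sel_spec a Ha) as (HUa&HFa&Hina). destruct (sel_spec b Hb) as (HUb&HFb&Hinb).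
  destruct Hwa as [Wa [HWa Hea]]. destruct Hwb as [Wb [HWb Hebb]].
  assert (Hl : forall c (ec : car E) W, sq c -> snd (sel c) W -> W ec -> EvD E B rho (fst (sel c)) (snd (sel c)) ->
      (forall u, 0 <= u <= 1 -> inB c dl (sg u)) -> pcont1 E (fun u => T c ec (sg u)) /\
      forall u, 0 <= u <= 1 -> W (T c ec (sg u)) /\ rho (T c ec (sg u)) = K (sg u)).
  { intros c ec W Hc HW Hec HF Hin.
    assert (Hm : forall u, 0 <= u <= 1 -> W (T c ec (sg u)) /\ rho (T c ec (sg u)) = K (sg u)).
    { intros u Hu. destruct (T_spec c ec (sg u)) as [W' (H1&H2&H3&H4)]; auto. apply Hsg; auto.
      exists W; auto. split; auto. apply (sheet_disj E B rho _ _ HF W' W ec H1 HW H2 Hec); auto. }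
    split; auto. intros V HV u Hu HVu.
    destruct (sheet_lift_cont E B rho (fun u => T c ec (sg u)) (fun u => K (sg u)) (fun u => 0 <= u <= 1) _ _ W HF HW Hm V HV u Hu HVu) as [O [HO [HOu HOV]]].
    destruct (hK O HO (sg u) (proj1 (Hsg u Hu)) HOu) as [eps [Heps Hq]].
    exists eps. split; auto. intros u' Hu' Hd. apply HOV; auto. apply Hq. apply Hsg; auto.
    unfold sg. rewrite (clamp_id u Hu), (clamp_id u' Hu'). apply lin_t_ball; auto. }
  destruct (Hl a e Wa Ha HWa Hea HFa (fun u Hu => proj1 (proj2 (Hsg u Hu)))) as [C1 M1].
  destruct (Hl b eb Wb Hb HWb Hebb HFb (fun u Hu => proj2 (proj2 (Hsg u Hu)))) as [C2 M2].
  assert (Hs0 : sg 0 = b) by (unfold sg; rewrite clamp_id by lra; apply lin0).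
  assert (Hs1 : sg 1 = z) by (unfold sg; rewrite clamp_id by lra; apply lin1).
  pose proof (uniq1 E B rho hcov _ _ C1 C2) as U1.
  assert (Eq : T a e (sg 1) = T b eb (sg 1)).
  { apply U1 with (a := 0); try lra.
    - intros u Hu. rewrite (proj2 (M1 u Hu)), (proj2 (M2 u Hu)). auto.
    - rewrite Hs0. rewrite (T_self b b eb); auto. apply inB_refl; auto. }
  rewrite Hs1 in Eq. symmetry. exact Eq.
Qed.

Variable N : nat.
Hypothesis HN : 0 < INR N.
Hypothesis HNd : / INR N < dl / 2.

Definition cpt q k := lin p0 q (INR k / INR N).

Lemma tk_in k : (k <= N)%nat -> 0 <= INR k / INR N <= 1.
Proof.
  intros Hk. apply le_INR in Hk. pose proof (pos_INR k). split.
  - unfold Rdiv. apply Rmult_le_pos; auto. left; apply Rinv_0_lt_compat; auto.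
  - unfold Rdiv. apply (Rmult_le_reg_r (INR N)); auto. rewrite Rmult_assoc, Rinv_l by lra. lra.
Qed.

Lemma cpt_sq q k : sq q -> (k <= N)%nat -> sq (cpt q k).
Proof. intros. apply lin_sq; auto. apply tk_in; auto. Qed.

Lemma cpt_step q k : sq q -> inB (cpt q k) (dl/2) (cpt q (S k)).
Proof.
  intros Hq. apply lin_t_ball; auto. rewrite S_INR.
  replace ((INR k + 1) / INR N - INR k / INR N) with (/ INR N) by (field; lra).
  rewrite Rabs_right; [lra|]. left; apply Rinv_0_lt_compat; auto.
Qed.

Lemma cpt_near q q' k r : (k <= N)%nat -> inB q r q' -> inB (cpt q k) r (cpt q' k).
Proof. intros. apply lin_b_ball; auto. apply tk_in; auto. Qed.

Lemma cpt_0 q : cpt q 0 = p0.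
Proof. unfold cpt. simpl. unfold Rdiv. rewrite Rmult_0_l. apply lin0. Qed.
Lemma cpt_N q : cpt q N = q.
Proof. unfold cpt. replace (INR N / INR N) with 1 by (field; lra). apply lin1. Qed.

Fixpoint eseq (q : R * R) (k : nat) : car E :=
  match k with
  | O => e0
  | S k' => T (cpt q k') (eseq q k') (cpt q (S k'))
  end.

Definition Lsq q := eseq q N.

Lemma F1 q : sq q -> forall k, (k <= N)%nat -> rho (eseq q k) = K (cpt q k).
Proof.
  intros Hq. induction k; intros Hk.
  - simpl. rewrite cpt_0. auto.
  - simpl. assert (Hk' : (k <= N)%nat) by lia.
    apply T_rho; try apply cpt_sq; auto.
    + eapply inB_mono; [|apply cpt_step; auto]. lra.
    + apply (Te_hyp _ (cpt q k)); try apply cpt_sq; auto. apply inB_refl; auto.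
Qed.

Lemma F2 q q' : sq q -> sq q' -> inB q (dl/2) q' -> forall k, (k <= N)%nat ->
  eseq q' k = T (cpt q k) (eseq q k) (cpt q' k).
Proof.
  intros Hq Hq' Hqq. induction k; intros Hk.
  - simpl. rewrite !cpt_0. symmetry. apply T_self; auto. apply inB_refl; auto.
  - assert (Hk' : (k <= N)%nat) by lia. simpl. rewrite IHk by auto.
    pose proof (cpt_sq q k Hq Hk') as S1. pose proof (cpt_sq q (S k) Hq Hk) as S2.
    pose proof (cpt_sq q' k Hq' Hk') as S3. pose proof (cpt_sq q' (S k) Hq' Hk) as S4.
    pose proof (cpt_step q k Hq) as D1. pose proof (cpt_step q' k Hq') as D2.
    pose proof (cpt_near q q' k _ Hk' Hqq) as D3. pose proof (cpt_near q q' (S k) _ Hk Hqq) as D4.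
    assert (D5 : inB (cpt q k) dl (cpt q' (S k))).
    { replace dl with (dl/2 + dl/2) by field. eapply inB_tri; eauto. }
    pose proof (F1 q Hq k Hk') as R1.
    rewrite (T_cocycle (cpt q k) (cpt q' k) (cpt q' (S k))); auto;
      try (eapply inB_mono; [|eassumption]; lra).
    rewrite (T_cocycle (cpt q k) (cpt q (S k)) (cpt q' (S k))); auto;
      try (eapply inB_mono; [|eassumption]; lra).
Qed.

Lemma Lsq_rho q : sq q -> rho (Lsq q) = K q.
Proof. intros. unfold Lsq. rewrite F1; auto. rewrite cpt_N; auto. Qed.

Lemma Lsq_near q q' : sq q -> sq q' -> inB q (dl/2) q' -> Lsq q' = T q (Lsq q) q'.
Proof. intros. unfold Lsq. rewrite (F2 q q'); auto. rewrite !cpt_N. auto. Qed.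

Lemma Lsq_p0 : Lsq p0 = e0.
Proof.
  unfold Lsq. assert (forall k, eseq p0 k = e0). 
  { induction k; simpl; auto. rewrite IHk. unfold cpt. rewrite !lin_same. apply T_self; auto. apply inB_refl; auto. }
  auto.
Qed.

Lemma Lsq_cont : contS E Lsq.
Proof.
  intros V HV q Hq HVq.
  destruct (Te_hyp q q (Lsq q) Hq Hq (inB_refl q dl hdl) (Lsq_rho q Hq)) as [W [HW Hw]].
  destruct (sel_spec q Hq) as (HU&HF&Hin).
  assert (Hm : forall q', (sq q' /\ inB q (dl/2) q') -> W (Lsq q') /\ rho (Lsq q') = K q').
  { intros q' [Hq' Hd]. split; [|apply Lsq_rho; auto].
    rewrite (Lsq_near q q' Hq Hq' Hd).
    destruct (T_spec q (Lsq q) q') as [W' (H1&H2&H3&H4)]; auto.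
    eapply inB_mono; [|exact Hd]; lra. exists W; auto.
    apply (sheet_disj E B rho _ _ HF W' W (Lsq q) H1 HW H2 Hw); auto. }
  destruct (sheet_lift_cont E B rho Lsq K (fun q' => sq q' /\ inB q (dl/2) q') _ _ W HF HW Hm V HV q
     (conj Hq (inB_refl q (dl/2) ltac:(lra))) HVq) as [O [HO [HOq HOV]]].
  destruct (hK O HO q Hq HOq) as [eps [Heps Hk]].
  exists (Rmin eps (dl/2)). split. apply Rmin_glb_lt; lra.
  intros q' Hq' Hd. apply HOV. split; auto. eapply inB_mono; [|exact Hd]; apply Rmin_r.
  apply Hk; auto. eapply inB_mono; [|exact Hd]; apply Rmin_l.
Qed.
End Exist.

Lemma lift2 (E B : prestream) (hE : is_stream E) (hB : is_stream B) (rho : car E -> car B)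
  (hcov : forall b, exists U, sopen B U /\ U b /\ exists F, EvD E B rho U F)
  (K : R * R -> car B) (hK : contS B K) (p0 : R * R) (e0 : car E) (hp0 : sq p0) (he0 : rho e0 = K p0) :
  exists L : R * R -> car E, contS E L /\ (forall q, sq q -> rho (L q) = K q) /\ L p0 = e0.
Proof.
  set (P := fun x y r => exists UF : (car B -> Prop) * ((car E -> Prop) -> Prop),
     sopen B (fst UF) /\ EvD E B rho (fst UF) (snd UF) /\ forall q, sq q -> inB (x, y) r q -> fst UF (K q)).
  destruct (leb_main P) as [dl [Hdl HP]].
  { intros x y r x' y' r' [UF (H1&H2&H3)] Hr' Hx Hy. exists UF. split; auto. split; auto.
    intros q Hq [Hq1 Hq2]. apply H3; auto. split; simpl in *; eapply ball_mono; eauto. }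
  { intros x y Hx Hy. destruct (hcov (K (x, y))) as [U [HU [Hu [F HF]]]].
    destruct (hK U HU (x, y) (conj Hx Hy) Hu) as [eps [Heps Hq]].
    exists eps. split; auto. exists (U, F). simpl. split; auto. }
  assert (hP : forall a, sq a -> exists UF, GoodUF E B rho K dl a UF).
  { intros [x y] [Hx Hy]. apply (HP x y Hx Hy). }
  destruct (INR_archimed (dl/2) 1) as [N HNa]; [lra|].
  assert (HN : 0 < INR N). { destruct N. simpl in HNa. lra. apply lt_0_INR. lia. }
  assert (HNd : / INR N < dl / 2).
  { apply (Rmult_lt_reg_l (INR N)); auto. rewrite Rinv_r by lra. lra. }
  exists (Lsq E B rho K p0 e0 dl N). split; [|split].
  - apply Lsq_cont; auto.
  - intros. apply Lsq_rho; auto.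
  - apply Lsq_p0; auto.
Qed.


Definition mk (x : R) : car I01 := exist (fun t => 0 <= t <= 1) (clamp x) (clamp_in x).

Lemma mk_proj (s : car I01) : mk (proj1_sig s) = s.
Proof. apply sig_ext. simpl. apply clamp_id. apply proj2_sig. Qed.
Lemma proj_mk x : 0 <= x <= 1 -> proj1_sig (mk x) = x.
Proof. intros; simpl; apply clamp_id; auto. Qed.
Lemma mk0 : mk 0 = i0. Proof. apply sig_ext. simpl. apply clamp_id. lra. Qed.
Lemma mk1 : mk 1 = i1. Proof. apply sig_ext. simpl. apply clamp_id. lra. Qed.

Lemma pcont1_ext X (l1 l2 : R -> car X) : pcont1 X l1 -> (forall x, 0 <= x <= 1 -> l1 x = l2 x) -> pcont1 X l2.
Proof.
  intros H Heq V HV x Hx HVx. rewrite <- Heq in HVx by auto. destruct (H V HV x Hx HVx) as [eps [He Hq]].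
  exists eps. split; auto. intros. rewrite <- Heq by auto. auto.
Qed.

Lemma i01_pcont X (f : car I01 -> car X) : (forall V, sopen X V -> sopen I01 (fun x => V (f x))) ->
  pcont1 X (fun x => f (mk x)).
Proof.
  intros Hf V HV x Hx HVx. destruct (Hf V HV) as [W [HW Hiff]].
  assert (Wx : W x). { rewrite <- (proj_mk x Hx). apply Hiff. auto. }
  destruct (HW x Wx) as [eps [He Hq]]. exists eps. split; auto. intros x' Hx' Hd.
  apply Hiff. rewrite proj_mk by auto. apply Hq. auto.
Qed.

Lemma pcont1_i01 X (f : car I01 -> car X) : pcont1 X (fun x => f (mk x)) ->
  forall V, sopen X V -> sopen I01 (fun x => V (f x)).
Proof.
  intros Hf V HV.
  exists (fun x => exists eps x0, 0 < eps /\ 0 <= x0 <= 1 /\ Rabs (x - x0) < eps /\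
            forall x', 0 <= x' <= 1 -> Rabs (x' - x0) < eps -> V (f (mk x'))).
  split.
  - intros x [eps [x0 (H1&H2&H3&H4)]]. exists (eps - Rabs (x - x0)). split; [lra|].
    intros y Hy. exists eps, x0. repeat split; auto; try lra.
    pose proof (Rabs_triang (y - x) (x - x0)). replace (y - x + (x - x0)) with (y - x0) in H by ring. lra.
  - intros s. split.
    + intros Hs. destruct (Hf V HV (proj1_sig s) (proj2_sig s)) as [eps [He Hq]].
      rewrite mk_proj; auto. exists eps, (proj1_sig s). repeat split; try apply (proj2_sig s); auto.
      rewrite Rminus_diag, Rabs_R0; auto.
    + intros [eps [x0 (H1&H2&H3&H4)]]. rewrite <- (mk_proj s). apply H4; auto. apply (proj2_sig s).
Qed.

Lemma contS_slice_y X (L : R * R -> car X) x : contS X L -> 0 <= x <= 1 -> pcont1 X (fun y => L (x, y)).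
Proof.
  intros H Hx V HV y Hy HVy. destruct (H V HV (x, y) (conj Hx Hy) HVy) as [eps [He Hq]].
  exists eps. split; auto. intros y' Hy' Hd. apply Hq. split; auto. split; simpl; auto.
  rewrite Rminus_diag, Rabs_R0; auto.
Qed.
Lemma contS_slice_x X (L : R * R -> car X) y : contS X L -> 0 <= y <= 1 -> pcont1 X (fun x => L (x, y)).
Proof.
  intros H Hy V HV x Hx HVx. destruct (H V HV (x, y) (conj Hx Hy) HVx) as [eps [He Hq]].
  exists eps. split; auto. intros x' Hx' Hd. apply Hq. split; auto. split; simpl; auto.
  rewrite Rminus_diag, Rabs_R0; auto.
Qed.

Lemma contS_sqopen X (L : R * R -> car X) : contS X L ->
  forall V, sopen X V -> sq_open (fun s t => V (L (proj1_sig s, proj1_sig t))).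
Proof.
  intros H V HV s t HVst. destruct (H V HV (proj1_sig s, proj1_sig t) (conj (proj2_sig s) (proj2_sig t)) HVst) as [eps [He Hq]].
  exists eps. split; auto. intros s' t' H1 H2. apply Hq. split; [exact (proj2_sig s')|exact (proj2_sig t')]. split; auto.
Qed.

Lemma sqopen_contS X (H : car I01 -> car I01 -> car X) :
  (forall V, sopen X V -> sq_open (fun s t => V (H s t))) -> contS X (fun p => H (mk (fst p)) (mk (snd p))).
Proof.
  intros Hc V HV [x y] [Hx Hy] HVp. simpl in *. destruct (Hc V HV (mk x) (mk y) HVp) as [eps [He Hq]].
  exists eps. split; auto. intros [x' y'] [Hx' Hy'] [D1 D2]. simpl in *. apply Hq.
  all: simpl; rewrite ?clamp_id; auto.
Qed.

Section Dipath.
Variables E B : prestream.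
Hypothesis hE : is_stream E.
Hypothesis hB : is_stream B.
Variable rho : car E -> car B.
Hypothesis hcov : forall b, exists U, sopen B U /\ U b /\ exists F, EvD E B rho U F.

Lemma lift_dipath (f : car I01 -> car E) : pcont1 E (fun x => f (mk x)) ->
  is_dipath B (fun t => rho (f t)) -> is_dipath E f.
Proof.
  intros Hc [_ Hd]. split; [apply pcont1_i01; auto|].
  intros V HV x y [Hxy Hin].
  set (P := fun a (_ : R) r => exists U F W, sopen B U /\ EvD E B rho U F /\ F W /\
     forall a', 0 <= a' <= 1 -> Rabs (a' - a) < r -> W (f (mk a'))).
  destruct (leb_main P) as [dl [Hdl HP]].
  { intros a b r a' b' r' [U [F [W (H1&H2&H3&H4)]]] Hr' Ha Hb.
    exists U, F, W. do 3 (split; [assumption|]). intros a'' Ha'' Hd'. apply H4; auto. eapply ball_mono; eauto. }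
  { intros a b Ha _. destruct (hcov (rho (f (mk a)))) as [U [HU [Hua [F HF]]]].
    destruct (in_sheet E B rho U F HF _ Hua) as [W [HW Hw]].
    destruct (Hc W (sheet_open E B rho U F HF W HW) a Ha Hw) as [eps [He Hq]].
    exists eps. split; auto. exists U, F, W. do 3 (split; [assumption|]). auto. }
  destruct (INR_archimed dl 1) as [N HNa]; [lra|].
  assert (HN : 0 < INR N). { destruct N. simpl in HNa. lra. apply lt_0_INR. lia. }
  set (a := proj1_sig x). set (b := proj1_sig y).
  assert (Hab : a <= b) by exact Hxy. assert (Ha : 0 <= a <= 1) by apply (proj2_sig x). assert (Hb : 0 <= b <= 1) by apply (proj2_sig y).
  set (tt := fun i : nat => a + INR i / INR N * (b - a)).
  assert (Htt : forall i, (i <= N)%nat -> a <= tt i <= b /\ 0 <= tt i <= 1).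
  { intros i Hi. pose proof (tk_in N HN i Hi). unfold tt.
    assert (0 <= INR i / INR N * (b - a)) by (apply Rmult_le_pos; lra).
    assert (INR i / INR N * (b - a) <= 1 * (b - a)) by (apply Rmult_le_compat_r; lra).
    split; [lra|]. apply conv1; auto. }
  assert (Hstep : forall i, tt (S i) - tt i < dl /\ tt i <= tt (S i)).
  { intros i. unfold tt. rewrite S_INR.
    replace (a + (INR i + 1) / INR N * (b - a) - (a + INR i / INR N * (b - a))) with ((b - a) / INR N) by (field; lra).
    split.
    - apply (Rmult_lt_reg_r (INR N)); auto. unfold Rdiv. rewrite Rmult_assoc, Rinv_l by lra. nra.
    - assert (0 <= (b - a) / INR N). { unfold Rdiv. apply Rmult_le_pos. lra. left. apply Rinv_0_lt_compat; auto. }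
      replace (a + (INR i + 1) / INR N * (b - a)) with (a + INR i / INR N * (b - a) + (b-a)/INR N) by (field; lra). lra. }
  assert (Hinv : forall s : car I01, a <= proj1_sig s <= b -> V (f s)) by (intros; apply Hin; auto).
  assert (Main : forall i, (i <= N)%nat -> circ E V (f x) (f (mk (tt i)))).
  { induction i; intros Hi.
    - unfold tt. simpl. unfold Rdiv. rewrite Rmult_0_l, Rmult_0_l, Rplus_0_r. replace (mk a) with x by (symmetry; apply mk_proj).
      apply circ_refl; auto. apply Hinv. split; [apply Rle_refl|exact Hxy].
    - assert (Hi' : (i <= N)%nat) by lia. eapply circ_trans; [exact hE|exact HV|apply IHi; auto|].
      destruct (Htt i Hi') as [T1 T2]. destruct (Htt (S i) Hi) as [T3 T4]. destruct (Hstep i) as [S1 S2].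
      destruct (HP (tt i) 0 T2 ltac:(lra)) as [U [F [W (H1&H2&H3&H4)]]].
      assert (HWs : forall s : car I01, tt i <= proj1_sig s <= tt (S i) -> W (f s) /\ V (f s)).
      { intros s Hs. split.
        - rewrite <- (mk_proj s). apply H4. apply proj2_sig. rewrite Rabs_right; lra.
        - apply Hinv. lra. }
      destruct (sheet_image E B rho U F W V H2 H3 HV) as [O [HO HOV]].
      assert (HOU : sopen B (fun b0 => O b0 /\ U b0)) by (destruct hB as (_&_&H5&_); apply H5; auto).
      apply (sheet_circ E B hE hB rho U F H2 W V O); auto.
      + apply HWs. rewrite proj_mk; lra.
      + apply HWs. rewrite proj_mk; lra.
      + apply (Hd _ HOU). simpl. rewrite !clamp_id by lra. split; [lra|].
        intros s Hs. destruct (HWs s Hs) as [Ws Vs]. split.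
        * apply HOV; auto.
        * apply (sheet_over E B rho U F H2 W); auto. }
  pose proof (Main N (le_n N)) as HM. unfold tt in HM.
  replace (a + INR N / INR N * (b - a)) with b in HM by (field; lra). unfold b in HM. rewrite mk_proj in HM. exact HM.
Qed.
End Dipath.

Lemma paste X (A1 A2 : R * R -> car X) : contS X A1 -> contS X A2 ->
  (forall y, 0 <= y <= 1 -> A1 (1, y) = A2 (1, y)) ->
  contS X (fun p => if Rle_dec (fst p) (1/2) then A1 (2 * fst p, snd p) else A2 (2 - 2 * fst p, snd p)).
Proof.
  intros C1 C2 Heq V HV [x y] [Hx Hy] HVp. simpl in HVp, Hx, Hy.
  destruct (Rtotal_order x (1/2)) as [Hlt|[Heq2|Hgt]].
  - destruct (Rle_dec x (1/2)) as [_|]; [|lra].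
    destruct (C1 V HV (2*x, y) (conj (ltac:(simpl; lra) : 0 <= fst (2*x,y) <= 1) Hy) HVp) as [eps [He Hq]].
    exists (Rmin (eps/2) (1/2 - x)). split. apply Rmin_glb_lt; lra.
    intros [x' y'] [Hx' Hy'] [D1 D2]. simpl in *. pose proof (Rmin_l (eps/2) (1/2 - x)). pose proof (Rmin_r (eps/2) (1/2-x)).
    assert (x' < 1/2). { unfold Rabs in D1; destruct Rcase_abs; lra. }
    destruct (Rle_dec x' (1/2)); [|lra]. apply Hq. split; simpl; lra.
    split; simpl; [|lra]. replace (2*x' - 2*x) with (2*(x'-x)) by ring. rewrite Rabs_mult, Rabs_right by lra. lra.
  - subst x. destruct (Rle_dec (1/2) (1/2)) as [_|]; [|lra]. replace (2 * (1/2)) with 1 in HVp by field.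
    destruct (C1 V HV (1, y) (conj (ltac:(simpl; lra) : 0 <= fst (1,y) <= 1) Hy) HVp) as [e1 [He1 Hq1]].
    rewrite Heq in HVp by auto.
    destruct (C2 V HV (1, y) (conj (ltac:(simpl; lra) : 0 <= fst (1,y) <= 1) Hy) HVp) as [e2 [He2 Hq2]].
    exists (Rmin e1 e2 / 2). split. pose proof (Rmin_glb_lt e1 e2 0 He1 He2). lra.
    intros [x' y'] [Hx' Hy'] [D1 D2]. simpl in *. pose proof (Rmin_l e1 e2). pose proof (Rmin_r e1 e2).
    destruct (Rle_dec x' (1/2)).
    + apply Hq1. split; simpl; lra. split; simpl; [|lra].
      replace (2*x' - 1) with (2*(x'-1/2)) by field. rewrite Rabs_mult, (Rabs_right 2) by lra. lra.
    + apply Hq2. split; simpl; lra. split; simpl; [|lra].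
      replace (2 - 2*x' - 1) with (2*(1/2-x')) by field. rewrite Rabs_mult, (Rabs_right 2), Rabs_minus_sym by lra. lra.
  - destruct (Rle_dec x (1/2)) as [|_]; [lra|].
    destruct (C2 V HV (2 - 2*x, y) (conj (ltac:(simpl; lra) : 0 <= fst (2-2*x,y) <= 1) Hy) HVp) as [eps [He Hq]].
    exists (Rmin (eps/2) (x - 1/2)). split. apply Rmin_glb_lt; lra.
    intros [x' y'] [Hx' Hy'] [D1 D2]. simpl in *. pose proof (Rmin_l (eps/2) (x - 1/2)). pose proof (Rmin_r (eps/2) (x - 1/2)).
    assert (x' > 1/2). { unfold Rabs in D1; destruct Rcase_abs; lra. }
    destruct (Rle_dec x' (1/2)); [lra|]. apply Hq. split; simpl; lra.
    split; simpl; [|lra]. replace (2 - 2*x' - (2 - 2*x)) with (2*(x-x')) by ring.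
    rewrite Rabs_mult, (Rabs_right 2), Rabs_minus_sym by lra. lra.
Qed.

Lemma pcont1_const X (c : car X) : pcont1 X (fun _ => c).
Proof. intros V HV x Hx HVx. exists 1. split; [lra|]. auto. Qed.

Lemma sq_open_ext (P Q : car I01 -> car I01 -> Prop) : sq_open P -> (forall s t, P s t <-> Q s t) -> sq_open Q.
Proof.
  intros H Hiff s t HQ. apply Hiff in HQ. destruct (H s t HQ) as [eps [He Hq]]. exists eps. split; auto.
  intros. apply Hiff. auto.
Qed.

Section Main.
Variables E B : prestream.
Hypothesis hE : is_stream E.
Hypothesis hB : is_stream B.
Variable rho : car E -> car B.
Hypothesis hcov : forall b, exists U, sopen B U /\ U b /\ exists F, EvD E B rho U F.

Lemma path_lift (g : car I01 -> car B) : is_dipath B g -> forall j0 c, rho c = g j0 ->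
  exists f, is_dipath E f /\ f j0 = c /\ forall t, rho (f t) = g t.
Proof.
  intros Hg j0 c Hc.
  set (K := fun p : R * R => g (mk (snd p))).
  assert (HK : contS B K).
  { intros V HV [x y] [Hx Hy] HVp. destruct (i01_pcont B g (proj1 Hg) V HV y Hy HVp) as [eps [He Hq]].
    exists eps. split; auto. intros [x' y'] [_ Hy'] [_ D2]. apply Hq; auto. }
  destruct (lift2 E B hE hB rho hcov K HK (0, proj1_sig j0) c) as [L (HL1&HL2&HL3)].
  { split; simpl; [lra|apply (proj2_sig j0)]. }
  { unfold K. simpl. rewrite mk_proj. auto. }
  exists (fun t : car I01 => L (0, proj1_sig t)). split; [|split; auto].
  - apply lift_dipath with (rho := rho); auto.
    + apply (pcont1_ext E (fun y => L (0, y))). apply contS_slice_y; auto; lra.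
      intros. rewrite proj_mk; auto.
    + replace (fun t : car I01 => rho (L (0, proj1_sig t))) with g; auto.
      apply functional_extensionality. intros t. rewrite HL2. unfold K. simpl. rewrite mk_proj. auto.
      split; simpl; [lra|apply (proj2_sig t)].
  - intros t. rewrite HL2. unfold K. simpl. rewrite mk_proj. auto. split; simpl; [lra|apply (proj2_sig t)].
Qed.

Lemma const_homotopy (g : car I01 -> car B) (f : car I01 -> car E) : is_dipath B g ->
  (forall t, rho (f t) = g t) -> dihomotopic B (fun t => rho (f t)) g.
Proof.
  intros Hg Hf. exists (fun _ t => g t). split; [|split; [|split; [|split]]]; auto.
  - intros V HV. set (K := fun p : R * R => g (mk (snd p))).
    assert (HK : contS B K).
    { intros V' HV' [x y] [Hx Hy] HVp. destruct (i01_pcont B g (proj1 Hg) V' HV' y Hy HVp) as [eps [He Hq]].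
      exists eps. split; auto. intros [x' y'] [_ Hy'] [_ D2]. apply Hq; auto. }
    eapply sq_open_ext; [apply (contS_sqopen B K HK V HV)|]. intros s t. unfold K. simpl. rewrite mk_proj. tauto.
Qed.

Lemma homotopy_unique (j0 : car I01) (hj : j0 = i0 \/ j0 = i1) (f1 f2 : car I01 -> car E) (g : car I01 -> car B) (c : car E) :
  is_dipath E f1 -> is_dipath E f2 -> f1 j0 = c -> f2 j0 = c ->
  dihomotopic B (fun t => rho (f1 t)) g -> dihomotopic B (fun t => rho (f2 t)) g -> dihomotopic E f1 f2.
Proof.
  intros Hf1 Hf2 Hc1 Hc2 [H1 (C1&D1&E1&S1&T1)] [H2 (C2&D2&E2&S2&T2)].
  set (A1 := fun p : R * R => H1 (mk (fst p)) (mk (snd p))).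
  set (A2 := fun p : R * R => H2 (mk (fst p)) (mk (snd p))).
  set (K := fun p : R * R => if Rle_dec (fst p) (1/2) then A1 (2 * fst p, snd p) else A2 (2 - 2 * fst p, snd p)).
  assert (HK : contS B K).
  { apply paste; try apply sqopen_contS; auto. intros y Hy. unfold A1, A2. simpl. rewrite mk1, T1, T2. auto. }
  assert (Hend : forall j, j = i0 \/ j = i1 -> rho (f1 j) = g j /\ rho (f2 j) = g j).
  { intros j Hj. split.
    - rewrite <- T1. destruct Hj as [-> | ->]; symmetry; apply E1.
    - rewrite <- T2. destruct Hj as [-> | ->]; symmetry; apply E2. }
  assert (Kend : forall x j, j = i0 \/ j = i1 -> K (x, proj1_sig j) = g j).
  { intros x j Hj. unfold K, A1, A2. simpl. rewrite mk_proj. destruct (Hend j Hj) as [G1 G2].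
    destruct Rle_dec; destruct Hj as [-> | ->]; rewrite ?(proj1 (E1 _)), ?(proj2 (E1 _)), ?(proj1 (E2 _)), ?(proj2 (E2 _)); auto. }
  assert (K0 : forall y, K (0, y) = rho (f1 (mk y))).
  { intros y. unfold K, A1. simpl. destruct Rle_dec; [|lra]. replace (2 * 0) with 0 by ring. rewrite mk0. apply S1. }
  assert (K1 : forall y, K (1, y) = rho (f2 (mk y))).
  { intros y. unfold K, A2. simpl. destruct Rle_dec; [lra|]. replace (2 - 2 * 1) with 0 by ring. rewrite mk0. apply S2. }
  assert (Hj0 : 0 <= proj1_sig j0 <= 1) by apply (proj2_sig j0).
  destruct (lift2 E B hE hB rho hcov K HK (0, proj1_sig j0) c) as [L (HL1&HL2&HL3)].
  { split; simpl; [lra|auto]. }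
  { rewrite K0, mk_proj, Hc1. auto. }
  pose proof (uniq1 E B rho hcov) as U1.
  assert (Ua : forall y, 0 <= y <= 1 -> L (0, y) = f1 (mk y)).
  { intros y Hy. refine (U1 (fun y => L (0, y)) (fun y => f1 (mk y)) _ _ _ (proj1_sig j0) Hj0 _ y Hy).
    - apply contS_slice_y; auto; lra.
    - apply i01_pcont. apply (proj1 Hf1).
    - intros u Hu. rewrite HL2, K0; auto. split; simpl; lra.
    - simpl. rewrite mk_proj, Hc1. auto. }
  assert (Ud : forall j, j = i0 \/ j = i1 -> forall x, 0 <= x <= 1 -> L (x, proj1_sig j) = f1 j).
  { intros j Hj. assert (Hjr : 0 <= proj1_sig j <= 1) by apply (proj2_sig j).
    intros x Hx. refine (U1 (fun x => L (x, proj1_sig j)) (fun _ => f1 j) _ _ _ 0 ltac:(lra) _ x Hx).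
    - apply contS_slice_x; auto.
    - apply pcont1_const.
    - intros u Hu. rewrite HL2, Kend; auto. symmetry; apply Hend; auto. split; simpl; lra.
    - simpl. rewrite Ua, mk_proj; auto. }
  assert (Uc : forall y, 0 <= y <= 1 -> L (1, y) = f2 (mk y)).
  { intros y Hy. refine (U1 (fun y => L (1, y)) (fun y => f2 (mk y)) _ _ _ (proj1_sig j0) Hj0 _ y Hy).
    - apply contS_slice_y; auto; lra.
    - apply i01_pcont. apply (proj1 Hf2).
    - intros u Hu. rewrite HL2, K1; auto. split; simpl; lra.
    - simpl. rewrite mk_proj, Hc2, Ud; auto. lra. }
  exists (fun s t => L (proj1_sig s, proj1_sig t)).
  split; [|split; [|split; [|split]]].
  - apply contS_sqopen; auto.
  - intros s. apply lift_dipath with (rho := rho); auto.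
    + apply (pcont1_ext E (fun y => L (proj1_sig s, y))). apply contS_slice_y; auto; apply (proj2_sig s).
      intros. rewrite proj_mk; auto.
    + assert (Hs : 0 <= proj1_sig s <= 1) by apply (proj2_sig s).
      assert (Heq : (fun t : car I01 => rho (L (proj1_sig s, proj1_sig t))) = (fun t : car I01 => K (proj1_sig s, proj1_sig t))).

      { apply functional_extensionality. intros t. apply HL2. split; simpl; auto. apply (proj2_sig t). }
      rewrite Heq. destruct (Rle_dec (proj1_sig s) (1/2)).
      * assert (Heq2 : (fun t : car I01 => K (proj1_sig s, proj1_sig t)) = H1 (mk (2 * proj1_sig s))).
        { apply functional_extensionality; intros t; unfold K, A1; simpl; destruct Rle_dec; [|lra]; rewrite mk_proj; auto. }
        rewrite Heq2; auto.
      * assert (Heq2 : (fun t : car I01 => K (proj1_sig s, proj1_sig t)) = H2 (mk (2 - 2 * proj1_sig s))).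
        { apply functional_extensionality; intros t; unfold K, A2; simpl; destruct Rle_dec; [lra|]; rewrite mk_proj; auto. }
        rewrite Heq2; auto.
  - intros s. split.
    + apply (Ud i0 (or_introl eq_refl)). apply (proj2_sig s).
    + apply (Ud i1 (or_intror eq_refl)). apply (proj2_sig s).
  - intros t. simpl. rewrite Ua, mk_proj; auto. apply (proj2_sig t).
  - intros t. simpl. rewrite Uc, mk_proj; auto. apply (proj2_sig t).
Qed.
End Main.

Theorem mainTheorem11 (E B : prestream) (hE : is_stream E) (hB : is_stream B)
  (rho : car E -> car B) (hrho : is_stream_covering E B rho) :
  op_fibration (T1f rho) /\ op_fibration (opfunctor (T1f rho)).
Proof.
  destruct hrho as [_ [_ hcov]].
  assert (hcov' : forall b, exists U, sopen B U /\ U b /\ exists F, EvD E B rho U F) by exact hcov.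
  split.
  - intros c g Hg Hsrc. simpl in *. split.
    + destruct (path_lift E B hE hB rho hcov' g Hg i0 c (eq_sym Hsrc)) as [f (Hf1&Hf2&Hf3)].
      exists f. split; auto. split; auto. apply const_homotopy; auto.
    + intros f1 f2 H1 H2 Hs1 Hs2 Ha1 Ha2. apply (homotopy_unique E B hE hB rho hcov' i0 (or_introl eq_refl) f1 f2 g c); auto.
  - intros c g Hg Hsrc. simpl in *. split.
    + destruct (path_lift E B hE hB rho hcov' g Hg i1 c (eq_sym Hsrc)) as [f (Hf1&Hf2&Hf3)].
      exists f. split; auto. split; auto. apply const_homotopy; auto.
    + intros f1 f2 H1 H2 Hs1 Hs2 Ha1 Ha2. apply (homotopy_unique E B hE hB rho hcov' i1 (or_intror eq_refl) f1 f2 g c); auto.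
Qed.
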